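(* The Petersen graph is uniformly vertex-transitive but is not a Cayley graph.
   Context: The Petersen graph has as vertices the $2$-element subsets of $\{1,2,3,4,5\}$, two being adjacent iff they are disjoint. A permutation $\sigma$ of $V(\Gamma)$ is identified with its permutation matrix (the $(u,v)$ entry is $1$ iff $\sigma(u)=v$); $J_n$ is the $n\times n$ all-ones matrix. A graph $\Gamma$ on $n$ vertices is uniformly vertex-transitive if there is a set of $n$ distinct automorphisms $\{\sigma_1,\ldots,\sigma_n\}\subset\operatorname{Aut}(\Gamma)$ with $\sum_i\sigma_i=J_n$. A Cayley graph $C(G,S)$, for a finite group $G$ and subset $S\subset G$, has vertex set $G$, with $a,b$ adjacent iff $a=sb$ or $b=sa$ for some $s\in S$; a graph is Cayley if it is isomorphic to some $C(G,S)$. *)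

(* Defs.v *)
From HB Require Import structures.
From mathcomp Require Import all_boot all_fingroup.
Set Implicit Arguments. Unset Strict Implicit. Unset Printing Implicit Defensive.

(* Vertices of the Petersen graph: 2-element subsets of a 5-element set
   ({0,..,4} = 'I_5 stands for {1,..,5}). *)
Definition pvert := {A : {set 'I_5} | #|A| == 2}.

Definition petersen_adj : rel pvert :=
  fun u v => [disjoint val u & val v].

Definition is_graph_aut (T : finType) (e : rel T) (s : {perm T}) : Prop :=
  forall u v, e (s u) (s v) = e u v.

(* Uniformly vertex-transitive: a set Sig of n = #|T| distinct automorphisms
   whose permutation matrices sum to J_n, i.e. for every entry (u,v)
   exactly one sigma in Sig satisfies sigma u = v. *)
Definition uniformly_vertex_transitive (T : finType) (e : rel T) : Prop :=
  exists Sig : {set {perm T}},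
    [/\ #|Sig| = #|T|,
        (forall s, s \in Sig -> is_graph_aut e s) &
        (forall u v, #|[set s in Sig | s u == v]| = 1)].

Definition cayley_adj (gT : finGroupType) (S : {set gT}) : rel gT :=
  fun a b => [exists s in S, (a == (s * b)%g) || (b == (s * a)%g)].

Definition is_cayley (T : finType) (e : rel T) : Prop :=
  exists (gT : finGroupType) (S : {set gT}) (f : T -> gT),
    bijective f /\ (forall u v, e u v = cayley_adj S (f u) (f v)).

(* Main.v *)
From HB Require Import structures.
Require Import Defs.
From mathcomp Require Import all_boot all_fingroup cyclic.
Set Implicit Arguments. Unset Strict Implicit. Unset Printing Implicit Defensive.

Inductive V := V0|V1|V2|V3|V4|V5|V6|V7|V8|V9.
Definition v2n (v:V) : nat := match v with V0=>0|V1=>1|V2=>2|V3=>3|V4=>4|V5=>5|V6=>6|V7=>7|V8=>8|V9=>9 end.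
Definition n2v (n:nat) : option V := match n with 0=>Some V0|1=>Some V1|2=>Some V2|3=>Some V3|4=>Some V4|5=>Some V5|6=>Some V6|7=>Some V7|8=>Some V8|9=>Some V9|_=>None end.
Lemma v2nK : pcancel v2n n2v. Proof. by case. Qed.
HB.instance Definition _ := PCanIsCountable v2nK.
Definition enumV := [:: V0;V1;V2;V3;V4;V5;V6;V7;V8;V9].
Lemma enumVP : Finite.axiom enumV. Proof. by case. Qed.
HB.instance Definition _ := isFinite.Build V enumVP.

Lemma allV (P : pred V) : all P enumV -> forall x, P x.
Proof. by move=> /allP H x; apply: H; case: x. Qed.
Lemma allV2 (P : V -> V -> bool) : all (fun x => all (fun y => P x y) enumV) enumV -> forall x y, P x y.
Proof. by move=> H x; apply: allV; apply: (allV H). Qed.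
Lemma allV3 (P : V -> V -> V -> bool) :
  all (fun x => all (fun y => all (fun z => P x y z) enumV) enumV) enumV -> forall x y z, P x y z.
Proof. by move=> H x y; apply: allV; apply: (allV2 H). Qed.

Definition pa (x : V) : nat := nth 0 [:: 0; 0; 0; 0; 1; 1; 1; 2; 2; 3] (v2n x).
Definition pb (x : V) : nat := nth 0 [:: 1; 2; 3; 4; 2; 3; 4; 3; 4; 4] (v2n x).
Definition adjW (x y : V) : bool :=
  [&& pa x != pa y, pa x != pb y, pb x != pa y & pb x != pb y].

Lemma pab_ok x : [&& pa x < 5, pb x < 5 & pa x != pb x].
Proof. by case: x. Qed.

Definition u0 : pvert.
Proof. exists [set (ord0 : 'I_5); ord_max]. by rewrite cards2. Defined.

Definition phi (x : V) : pvert := insubd u0 [set (inord (pa x) : 'I_5); inord (pb x)].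

Lemma inord_eq (p q : nat) : p < 5 -> q < 5 -> ((inord p : 'I_5) == inord q) = (p == q).
Proof. by move=> hp hq; rewrite -val_eqE /= !inordK. Qed.

Lemma phiE x : val (phi x) = [set (inord (pa x) : 'I_5); inord (pb x)].
Proof.
rewrite /phi insubdK //; rewrite unfold_in /= cards2; case/and3P: (pab_ok x) => h1 h2 h3.
by rewrite inord_eq ?h3.
Qed.

Lemma disj2 (a b c d : 'I_5) :
  [disjoint [set a; b] & [set c; d]] = [&& a != c, a != d, b != c & b != d].
Proof.
rewrite disjoints_subset subUset !sub1set !inE.
by case: (a == c); case: (a == d); case: (b == c); case: (b == d).
Qed.

Lemma phi_adj x y : petersen_adj (phi x) (phi y) = adjW x y.
Proof.
rewrite /petersen_adj !phiE disj2 /adjW.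
case/and3P: (pab_ok x) => h1 h2 _; case/and3P: (pab_ok y) => h3 h4 _.
by rewrite !inord_eq.
Qed.

Lemma phi_inj : injective phi.
Proof.
have H : all (fun x => all (fun y => all (fun z => adjW x z == adjW y z) enumV ==> (x == y)) enumV) enumV.
  by vm_compute.
move=> x y e; apply/eqP.
move/implyP: (allV2 H x y); apply; apply/allP => z _.
by rewrite -!phi_adj e.
Qed.

Lemma phi_surj u : exists x, phi x = u.
Proof.
have H : all (fun n => all (fun m => (n != m) ==> has (fun x => ((pa x == n) && (pb x == m)) || ((pa x == m) && (pb x == n))) enumV) (iota 0 5)) (iota 0 5).
  by vm_compute.
case/cards2P: (valP u) => a [b [ab ua]].
have ha : val a \in iota 0 5 by rewrite mem_iota /= ltn_ord.
have hb : val b \in iota 0 5 by rewrite mem_iota /= ltn_ord.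
have H1 := allP H (val a) ha.
have H2 := allP H1 (val b) hb.
rewrite val_eqE ab in H2; case/hasP: (implyP H2 isT) => x _ hx.
exists x; apply: val_inj; rewrite phiE ua.
by case/orP: hx => /andP [/eqP -> /eqP ->]; rewrite !inord_val // setUC.
Qed.

Definition psi (u : pvert) : V := odflt V0 [pick x | phi x == u].

Lemma psiK : cancel psi phi.
Proof.
move=> u; rewrite /psi; case: pickP => [x /eqP //|H].
by case: (phi_surj u) => x e; move: (H x); rewrite e eqxx.
Qed.

Lemma phiK : cancel phi psi.
Proof. by move=> x; apply: phi_inj; rewrite psiK. Qed.

Lemma phi_bij : bijective phi.
Proof. exact: Bijective phiK psiK. Qed.

Lemma cardP : #|{: pvert}| = 10.
Proof. rewrite -(bij_eq_card phi_bij) cardT enumT unlock; vm_compute; reflexivity. Qed.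

Definition tblM : seq (seq nat) :=
 [:: [:: 0; 1; 2; 3; 4; 5; 6; 7; 8; 9]; [:: 1; 2; 3; 0; 7; 8; 4; 9; 5; 6]; [:: 2; 5; 9; 7; 0; 3; 1; 6; 4; 8]; [:: 3; 8; 6; 9; 1; 0; 2; 4; 7; 5]; [:: 4; 6; 0; 5; 8; 1; 7; 3; 9; 2]; [:: 5; 9; 7; 2; 6; 4; 0; 8; 3; 1]; [:: 6; 0; 5; 4; 3; 9; 8; 2; 1; 7]; [:: 7; 4; 1; 8; 5; 2; 9; 0; 6; 3]; [:: 8; 7; 4; 1; 9; 6; 3; 5; 2; 0]; [:: 9; 3; 8; 6; 2; 7; 5; 1; 0; 4]].
Definition mW (i x : V) : V := nth V0 enumV (nth 0 (nth [::] tblM (v2n i)) (v2n x)).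
Definition findi (x y : V) : V := head V0 [seq i <- enumV | mW i x == y].

Lemma mW_aut i x y : adjW (mW i x) (mW i y) = adjW x y.
Proof.
have H : all (fun i => all (fun x => all (fun y => adjW (mW i x) (mW i y) == adjW x y) enumV) enumV) enumV.
  by vm_compute.
exact: (eqP (allV3 H i x y)).
Qed.

Lemma mW_sharp x y i : (mW i x == y) = (i == findi x y).
Proof.
have H : all (fun x => all (fun y => all (fun i => (mW i x == y) == (i == findi x y)) enumV) enumV) enumV.
  by vm_compute.
exact: (eqP (allV3 H x y i)).
Qed.

Lemma mW_inj i : injective (mW i).
Proof.
have H : all (fun i => all (fun x => all (fun y => (mW i x == mW i y) ==> (x == y)) enumV) enumV) enumV.
  by vm_compute.
by move=> x y e; apply/eqP; move: (allV3 H i x y); rewrite e eqxx.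
Qed.

Definition pvf (i : V) (u : pvert) : pvert := phi (mW i (psi u)).
Lemma pvf_inj i : injective (pvf i).
Proof. move=> u v /phi_inj /mW_inj; exact: (can_inj psiK). Qed.
Definition pvp (i : V) : {perm pvert} := perm (@pvf_inj i).

Lemma pvpE i u : pvp i u = phi (mW i (psi u)).
Proof. by rewrite permE. Qed.

Lemma pvp_eq i u v : (pvp i u == v) = (i == findi (psi u) (psi v)).
Proof.
rewrite pvpE -mW_sharp; apply/eqP/eqP => e; [by rewrite -e phiK | by rewrite e psiK].
Qed.

Lemma pvp_inj : injective pvp.
Proof.
move=> i j e.
have h0 : pvp j (phi V0) = pvp i (phi V0) by rewrite e.
have h1 := pvp_eq i (phi V0) (pvp i (phi V0)).
have h2 := pvp_eq j (phi V0) (pvp i (phi V0)).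
rewrite eqxx in h1; rewrite h0 eqxx in h2.
by move/esym/eqP: h1 ->; move/esym/eqP: h2 ->.
Qed.

Lemma part1 : uniformly_vertex_transitive petersen_adj.
Proof.
exists [set pvp i | i : V]; split.
- rewrite card_imset; last exact: pvp_inj.
  exact: bij_eq_card phi_bij.
- move=> s /imsetP [i _ ->] u v.
  by rewrite !pvpE phi_adj mW_aut -phi_adj !psiK.
- move=> u v.
  have -> : [set s in [set pvp i | i : V] | s u == v] = [set pvp (findi (psi u) (psi v))].
    apply/setP => s; rewrite !inE; apply/andP/eqP => [[/imsetP [i _ ->]]|->].
      by rewrite pvp_eq => /eqP ->.
    by split; [apply: imset_f | rewrite pvp_eq].
  by rewrite cards1.
Qed.

Import GroupScope.

Section Grp.
Variable gT : finGroupType.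
Variable S : {set gT}.
Local Notation adj := (cayley_adj S).
Hypothesis card10 : #|gT| = 10.
Hypothesis noloop : forall g : gT, ~~ adj g g.
Hypothesis no4 : forall u w p q : gT, u != w -> p != q -> adj p u -> adj p w -> adj q u -> adj q w -> False.
Hypothesis three : exists t1 t2 t3 : gT, [/\ adj t1 1, adj t2 1, adj t3 1, [&& t1 != t2, t1 != t3 & t2 != t3] &
   forall t, adj t 1 -> [|| t == t1, t == t2 | t == t3]].

Lemma adj_mulr (u w g : gT) : adj (u * g) (w * g) = adj u w.
Proof.
apply: eq_existsb => s; rewrite !mulgA !(inj_eq (@mulIg _ g)) //.
Qed.

Lemma adj_sym (u w : gT) : adj u w = adj w u.
Proof. by apply: eq_existsb => s; rewrite orbC. Qed.

Lemma adjE (u w : gT) : adj u w = adj (u * w^-1) 1.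
Proof. by rewrite -(adj_mulr (u * w^-1) 1 w) mulgKV mul1g. Qed.

Lemma adj_inv (t : gT) : adj t 1 -> adj t^-1 1.
Proof. by rewrite -adj_sym adjE mul1g. Qed.

Lemma adjL (t g : gT) : adj t 1 -> adj (t * g) g.
Proof. by rewrite -(adj_mulr t 1 g) mul1g. Qed.

Lemma adj_ne1 (t : gT) : adj t 1 -> t != 1.
Proof. by apply: contraTneq => ->; rewrite (negbTE (noloop 1)). Qed.

Lemma dvd10 d : d %| 10 -> [\/ d = 1, d = 2, d = 5 | d = 10]%N.
Proof.
move=> H; have := @dvdn_leq d 10 isT H; move: H.
by do 11?[case: d => [|d] //]; move=> _ _ ; [constructor 1|constructor 2|constructor 3|constructor 4].
Qed.

Lemma ord10 (g : gT) : (#[g] %| 10)%N.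
Proof. by rewrite -card10 -cardsT order_dvdG ?inE. Qed.

Lemma inv_notin (y z : gT) : y * y = 1 -> y != 1 -> y \in <[z]> -> #[z] = 5%N -> False.
Proof.
move=> y2 y1 yz z5.
have d5 : (#[y] %| 5)%N by rewrite -z5 orderE; apply: cardSg; rewrite cycle_subG.
have d2 : (#[y] %| 2)%N by rewrite order_dvdn expgS expg1 y2.
have := @dvdn_leq _ 2 isT d2; have := order_gt0 y.
move: d5 y1; rewrite -order_eq1.
by case: #[y] => [|[|[|]]].
Qed.

Lemma idx2 (H : {group gT}) (g k : gT) : #|H| = 5%N -> g \notin H -> k \notin H -> g * k \in H.
Proof.
move=> H5 gH kH; apply/negPn/negP => gkH.
have sub : g *: H \subset ~: H.
  apply/subsetP => y; rewrite mem_lcoset inE; apply: contraL => yH.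
  apply: contra gH => gyH.
  by rewrite -(invgK g) groupV -(mulgK y g^-1) groupM // groupV.
have cH : #|~: H| = 5%N.
  by have := cardsC H; rewrite card10 H5 => e; apply/eqP; rewrite -(eqn_add2l 5) e.
have eqH : g *: H = ~: H by apply/eqP; rewrite eqEcard sub cH card_lcoset H5.
move: gkH; rewrite -in_setC -eqH mem_lcoset mulKg.
by rewrite (negbTE kH).
Qed.

Lemma comm_contra (s t : gT) : adj s 1 -> adj t 1 -> s != t -> s * t != 1 -> s * t = t * s -> False.
Proof.
move=> hs ht st st1 c.
apply: (@no4 1 (s * t) s t) => //.
- by rewrite eq_sym.
- have e1 : s = t^-1 * (t * s) by rewrite mulKg.
  by rewrite c {1}e1; apply: adjL; apply: adj_inv.
- have e1 : t = s^-1 * (s * t) by rewrite mulKg.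
  by rewrite {1}e1; apply: adjL; apply: adj_inv.
Qed.

Lemma ord_cases (x : gT) : x != 1 -> x * x != 1 -> x ^+ 5 = 1 /\ #[x] = 5%N \/ <[x]> = [set: gT].
Proof.
move=> x1 x2; case: (dvd10 (ord10 x)) => o.
- by move: x1; rewrite -order_eq1 o.
- by move: x2; rewrite -(expg_order x) o expgS expg1 eqxx.
- by left; rewrite -o expg_order.
- by right; apply/eqP; rewrite eqEcard subsetT cardsT -orderE card10 o.
Qed.

Lemma pow4 (x : gT) : #[x] = 5%N -> x = x ^+ 4 -> False.
Proof.
move=> o5 e; have : x ^+ 3 = 1.
  by apply: (@mulIg _ x); rewrite mul1g -expgSr -e.
by move/eqP; rewrite -order_dvdn o5.
Qed.

Lemma case2 (a x : gT) : adj a 1 -> adj x 1 -> a^-1 = a -> x^-1 != x -> False.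
Proof.
move=> ha hx ai xi.
have a1 := adj_ne1 ha; have x1 := adj_ne1 hx.
have x2 : x * x != 1 by rewrite -eq_invg_mul.
have aa : a * a = 1 by apply/eqP; rewrite -eq_invg_mul ai.
have ax : a != x by apply/eqP => e; move: xi; rewrite -e ai eqxx.
have ax1 : a * x != 1 by rewrite -eq_invg_mul ai.
have nc : a * x <> x * a by move=> c; exact: (comm_contra ha hx ax ax1 c).
case: (ord_cases x1 x2) => [[x5 o5]|xT].
- pose H := <[x]>%G.
  have aH : a \notin H by apply/negP => aH; exact: (inv_notin aa a1 aH o5).
  have axH : a^-1 * x \notin H.
    apply: contra aH => axH; by rewrite -ai -(mulgK x a^-1) groupM ?groupV ?cycle_id.
  have H5 : #|H| = 5%N by rewrite -o5.
  have := idx2 H5 axH aH; rewrite -mulgA -conjgE => /cycleP [i xa].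
  rewrite -expg_mod_order o5 in xa.
  have xx : x = x ^+ (i %% 5 * (i %% 5)).
    by rewrite expgM -xa -conjXg -xa -conjgM aa conjg1.
  have : (i %% 5 < 5)%N by rewrite ltn_pmod.
  move: (i %% 5)%N xa xx => k xa xx.
  have xinv : x^-1 = x ^+ 4 by apply/eqP; rewrite eq_invg_mul -expgS x5.
  case: k xa xx => [|[|[|[|[|k]]]]] xa xx _ //.
  + by move/eqP: xa; rewrite expg0 conjg_eq1 (negbTE x1).
  + apply: nc; rewrite expg1 conjgE in xa.
    by rewrite -{1}xa mulKVg.
  + exact: (pow4 o5 xx).
  + rewrite -expg_mod_order o5 /= in xx; exact: (pow4 o5 xx).
  + apply: (@no4 1 (a * x^-1) a x^-1) => //.
    * by rewrite eq_sym -eq_mulgV1.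
    * by apply: contraNneq ax => e; apply/eqP; rewrite -[a]ai e invgK.
    * rewrite adjE invMg invgK ai -{1}ai -conjgE xa -xinv; exact: adj_inv.
    * exact: adj_inv.
    * by rewrite adjE invMg invgK mulKg ai.
- have : a \in <[x]> by rewrite xT inE.
  case/cycleP => i e; apply: nc; rewrite e.
  exact: (esym (commuteX i (commute_refl x))).
Qed.

Lemma case1 (a b c : gT) : adj a 1 -> adj b 1 -> adj c 1 -> a^-1 = a -> b^-1 = b -> c^-1 = c ->
  a != b -> a != c -> b != c -> False.
Proof.
move=> ha hb hc ai bi ci ab ac bc.
have a1 := adj_ne1 ha; have c1 := adj_ne1 hc.
have aa : a * a = 1 by apply/eqP; rewrite -eq_invg_mul ai.
have cc : c * c = 1 by apply/eqP; rewrite -eq_invg_mul ci.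
have ab1 : a * b != 1 by rewrite -eq_invg_mul ai.
have nc : a * b <> b * a by move=> e; exact: (comm_contra ha hb ab ab1 e).
set r := a * b.
have r2 : r * r != 1.
  apply/negP => /eqP e; apply: nc.
  have : r^-1 = r by apply/eqP; rewrite eq_invg_mul e.
  by rewrite /r invMg ai bi.
have aab : a * r = b by rewrite /r mulgA aa mul1g.
case: (ord_cases ab1 r2) => [[r5 o5]|rT].
- pose H := <[r]>%G.
  have H5 : #|H| = 5%N by rewrite -o5.
  have aH : a \notin H by apply/negP => aH; exact: (inv_notin aa a1 aH o5).
  have cH : c \notin H by apply/negP => cH; exact: (inv_notin cc c1 cH o5).
  have := idx2 H5 aH cH => /cycleP [i e].
  rewrite -expg_mod_order o5 in e.
  have : (i %% 5 < 5)%N by rewrite ltn_pmod.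
  have ce : forall k, a * c = r ^+ k -> c = a * r ^+ k.
    by move=> k <-; rewrite mulgA aa mul1g.
  have rinv : r^-1 = r ^+ 4 by apply/eqP; rewrite eq_invg_mul -expgS r5.
  have r1 : r != 1 by [].
  have r21 : r ^+ 2 != 1 by rewrite expgS expg1.
  move: (i %% 5)%N e => k e.
  case: k e => [|[|[|[|[|k]]]]] e _ //; move: (ce _ e) => {}ce.
  + by move: ac; rewrite ce expg0 mulg1 eqxx.
  + by move: bc; rewrite ce expg1 aab eqxx.
  + apply: (@no4 1 r b c) => //.
    * by rewrite eq_sym.
    * by rewrite adjE /r invMg mulKVg ai.
    * by rewrite adjE {1}ce expgS expg1 mulgA mulgK aab.
  + apply: (@no4 1 (r ^+ 2) a c) => //.
    * by rewrite eq_sym.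
    * have r23 : (r ^+ 2)^-1 = r ^+ 3 by apply/eqP; rewrite eq_invg_mul -expgD; apply/eqP; exact: r5.
      by rewrite adjE r23 -ce.
    * have r23 : (r ^+ 2)^-1 = r ^+ 3 by apply/eqP; rewrite eq_invg_mul -expgD; apply/eqP; exact: r5.
      rewrite adjE r23 {1}ce -mulgA -expgD.
      have -> : r ^+ (3 + 3) = r by rewrite (expgD r 5 1) r5 mul1g expg1.
      by rewrite aab.
  + apply: (@no4 1 r a b) => //.
    * by rewrite eq_sym.
    * by rewrite adjE rinv -ce.
    * by rewrite adjE /r invMg mulKVg ai.
- have : a \in <[r]> by rewrite rT inE.
  case/cycleP => i e; apply: nc.
  have car : a * r = r * a by rewrite e; exact: (esym (commuteX i (commute_refl r))).
  have : b = r * a by rewrite -aab car.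
  by move=> e2; rewrite {2}e2 -mulgA aa mulg1.
Qed.

Lemma grp_false : False.
Proof.
case: three => t1 [t2 [t3 [h1 h2 h3 /and3P [d12 d13 d23] cl]]].
have inv_in t : adj t 1 -> [|| t^-1 == t1, t^-1 == t2 | t^-1 == t3].
  by move=> ht; apply: cl; apply: adj_inv.
case: (eqVneq t1^-1 t1) => i1; case: (eqVneq t2^-1 t2) => i2; case: (eqVneq t3^-1 t3) => i3.
- exact: (case1 h1 h2 h3 i1 i2 i3 d12 d13 d23).
- exact: (case2 h1 h3 i1 i3).
- exact: (case2 h1 h2 i1 i2).
- exact: (case2 h1 h2 i1 i2).
- exact: (case2 h2 h1 i2 i1).
- exact: (case2 h2 h1 i2 i1).
- exact: (case2 h3 h1 i3 i1).
- have := inv_in _ h1; rewrite (negbTE i1) /= => /orP [] /eqP e.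
  + have := inv_in _ h3; rewrite (negbTE i3) /= ?orbF => /orP [] /eqP e3.
    * by move: d23; rewrite -e -e3 invgK eqxx.
    * by move: d13; rewrite -(invgK t3) e3 -e invgK eqxx.
  + have := inv_in _ h2; rewrite (negbTE i2) /= ?orbF => /orP [] /eqP e2.
    * by move: d23; rewrite -e -e2 invgK eqxx.
    * by move: d12; rewrite -(invgK t2) e2 -e invgK eqxx.
Qed.

End Grp.


Definition nb (x0 : V) : seq V := [seq y <- enumV | adjW y x0].
Lemma nbP y x0 : (y \in nb x0) = adjW y x0.
Proof. by rewrite mem_filter; case: y; rewrite /= ?andbT. Qed.

Lemma nbW x0 : (size (nb x0) == 3) && uniq (nb x0).
Proof.
have H : all (fun x0 => (size (nb x0) == 3) && uniq (nb x0)) enumV by vm_compute.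
exact: (allV H).
Qed.

Lemma no4W x y z t : ~~ [&& x != y, z != t, adjW z x, adjW z y, adjW t x & adjW t y].
Proof.
have H : all (fun x => all (fun y => all (fun z => all (fun t =>
   ~~ [&& x != y, z != t, adjW z x, adjW z y, adjW t x & adjW t y]) enumV) enumV) enumV) enumV.
  by vm_compute.
exact: (allV (allV3 H x y z) t).
Qed.

Lemma part2 : ~ is_cayley petersen_adj.
Proof.
case=> gT [S [f [fbij fadj]]].
pose h x := f (phi x).
have hbij : bijective h by exact: (bij_comp fbij phi_bij).
have hadj x y : cayley_adj S (h x) (h y) = adjW x y by rewrite -fadj phi_adj.
case: hbij => hi hK hKi.
have hsurj g : g = h (hi g) by rewrite hKi.
have hinj := can_inj hK.
apply: (@grp_false gT S).
- by rewrite -(bij_eq_card (Bijective hK hKi)) cardT enumT unlock.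
- by move=> g; rewrite (hsurj g) hadj; case: (hi g).
- move=> u w p q; rewrite (hsurj u) (hsurj w) (hsurj p) (hsurj q) !hadj.
  move: (hi u) (hi w) (hi p) (hi q) => x y z t.
  rewrite !(inj_eq hinj) => xy zt a1 a2 a3 a4.
  by move: (no4W x y z t); rewrite xy zt a1 a2 a3 a4.
- pose x0 := hi 1.
  have e1 : (1 : gT) = h x0 := hsurj 1.
  have := nbW x0.
  case e: (nb x0) => [|n1 [|n2 [|n3 [|]]]] //= u3.
  exists (h n1), (h n2), (h n3); split.
  + by rewrite e1 hadj -nbP e !inE eqxx.
  + by rewrite e1 hadj -nbP e !inE eqxx ?orbT.
  + by rewrite e1 hadj -nbP e !inE eqxx ?orbT.
  + move: u3; rewrite !inE !(inj_eq hinj).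
    by case: (n1 == n2); case: (n1 == n3); case: (n2 == n3).
  + move=> t; rewrite (hsurj t) e1 hadj -nbP e !inE !(inj_eq hinj).
    done.
Qed.

Theorem mainTheorem3 :
  uniformly_vertex_transitive petersen_adj /\ ~ is_cayley petersen_adj.
Proof. split; [exact: part1 | exact: part2]. Qed.
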